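(* Let $n\ge1$, $q$ a prime power, $s\in\mathbb{F}_q$, and let $(\mathsf{Enc},\mathcal{A})$ be an $n$-party one-round aggregation protocol over $\mathbb{F}_q$ with encoder $\mathsf{Enc}:\mathbb{F}_q\to[\ell]^m$. For every $\mathbf{y}\in[\ell]^{nm}$, the set $\mathrm{Inv}_{\mathbf{y}}=\{\mathbf{x}\in\mathcal{B}_s:\Pr_{Y\sim\mathcal{S}^{\mathsf{Enc}}_{\mathbf{x}}}[Y=\mathbf{y}]>0\}$ satisfies $|\mathrm{Inv}_{\mathbf{y}}|\le n^{nm}$.
   Context: $\mathcal{B}_s=\{\mathbf{x}\in\mathbb{F}_q^n:\sum_ix_i=s\}$. An $n$-party one-round aggregation protocol over $\mathbb{F}_q$ with $m$ messages per party consists of a randomized encoder $\mathsf{Enc}:\mathbb{F}_q\to[\ell]^m$ (for some positive integer $\ell$; each party applies it to its input with independent randomness) and an analyzer $\mathcal{A}:[\ell]^{nm}\to\mathbb{F}_q$ such that for every $\mathbf{x}\in\mathbb{F}_q^n$, every possible realization of the encodings $\mathsf{Enc}(x_1),\dots,\mathsf{Enc}(x_n)$, and every permutation $\pi$ of $[nm]$, the analyzer applied to the concatenation $(\mathsf{Enc}(x_1),\dots,\mathsf{Enc}(x_n))$ with coordinates permuted by $\pi$ outputs $\sum_i x_i$. $\mathcal{S}^{\mathsf{Enc}}_{\mathbf{x}}$ is the distribution on $[\ell]^{nm}$ of this concatenation after applying an independent uniformly random permutation of the $nm$ coordinates. *)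

(* Defs.v *)
From HB Require Import structures.
From mathcomp Require Import all_boot all_order all_algebra all_fingroup.
Set Implicit Arguments. Unset Strict Implicit. Unset Printing Implicit Defensive.
Import Order.TTheory GRing.Theory Num.Theory.
Local Open Scope ring_scope.

(* Messages are elements of [l] = 'I_l.  An encoding of one party is a
   vector in [l]^m, represented as {ffun 'I_m -> 'I_l}.  A transcript of
   all parties is a row vector in [l]^(n*m). *)

(* concatenation (Enc(x_1),...,Enc(x_n)) : party i's j-th message sits at
   coordinate mxvec_index i j *)
Definition concat_enc (n m l : nat) (e : {ffun 'I_n -> {ffun 'I_m -> 'I_l}})
  : 'rV['I_l]_(n * m) :=
  mxvec (\matrix_(i < n, j < m) e i j).

Definition permute_coords (N l : nat) (pi : 'S_N) (v : 'rV['I_l]_N) : 'rV['I_l]_N :=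
  col_perm pi v.

Definition is_distr (T : finType) (p : T -> rat) : Prop :=
  (forall t, 0 <= p t) /\ \sum_(t : T) p t = 1.

Definition is_encoder (F : finFieldType) (m l : nat)
  (Enc : F -> {ffun 'I_m -> 'I_l} -> rat) : Prop :=
  forall a : F, is_distr (Enc a).

(* Pr_{Y ~ S^Enc_x}[Y = y]: independent encodings, then a uniformly random
   permutation of the nm coordinates *)
Definition shuffled_prob (F : finFieldType) (n m l : nat)
  (Enc : F -> {ffun 'I_m -> 'I_l} -> rat) (x : {ffun 'I_n -> F})
  (y : 'rV['I_l]_(n * m)) : rat :=
  \sum_(e : {ffun 'I_n -> {ffun 'I_m -> 'I_l}})
   \sum_(pi : 'S_(n * m))
     ((\prod_(i < n) Enc (x i) (e i)) / ((n * m)`!)%N%:R) *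
       (permute_coords pi (concat_enc e) == y)%:R.

Definition is_aggregation_protocol (F : finFieldType) (n m l : nat)
  (Enc : F -> {ffun 'I_m -> 'I_l} -> rat)
  (A : 'rV['I_l]_(n * m) -> F) : Prop :=
  is_encoder Enc /\
  forall (x : {ffun 'I_n -> F}) (e : {ffun 'I_n -> {ffun 'I_m -> 'I_l}})
         (pi : 'S_(n * m)),
    (forall i, 0 < Enc (x i) (e i)) ->
    A (permute_coords pi (concat_enc e)) = \sum_(i < n) x i.

Definition Bset (F : finFieldType) (n : nat) (s : F) : {set {ffun 'I_n -> F}} :=
  [set x : {ffun 'I_n -> F} | \sum_(i < n) x i == s].

Definition Inv (F : finFieldType) (n m l : nat)
  (Enc : F -> {ffun 'I_m -> 'I_l} -> rat) (s : F) (y : 'rV['I_l]_(n * m))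
  : {set {ffun 'I_n -> F}} :=
  [set x in Bset n s | 0 < shuffled_prob Enc x y].

(* Main.v *)
Require Import Defs.
From HB Require Import structures.
From mathcomp Require Import all_boot all_order all_algebra all_fingroup.
Import Order.TTheory GRing.Theory Num.Theory.

Set Implicit Arguments. Unset Strict Implicit. Unset Printing Implicit Defensive.

Section Aux.
Variables (n m l : nat).
Local Open Scope ring_scope.

Definition party (k : 'I_(n * m)) : 'I_n :=
  (enum_val (cast_ord (esym (mxvec_cast n m)) k)).1.

Lemma partyE i j : party (mxvec_index i j) = i.
Proof. by rewrite /party /mxvec_index cast_ordK enum_rankK. Qed.

Lemma concatE (e : {ffun 'I_n -> {ffun 'I_m -> 'I_l}}) i j :
  concat_enc e 0 (mxvec_index i j) = e i j.
Proof. by rewrite /concat_enc mxvecE mxE. Qed.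

Lemma concat_party (e e' : {ffun 'I_n -> {ffun 'I_m -> 'I_l}}) k :
  e (party k) = e' (party k) -> concat_enc e 0 k = concat_enc e' 0 k.
Proof.
by case/mxvec_indexP: k => i j; rewrite partyE !concatE => ->.
Qed.
End Aux.

Local Open Scope ring_scope.

Lemma witness (F : finFieldType) (n m l : nat)
  (Enc : F -> {ffun 'I_m -> 'I_l} -> rat) x y :
  is_encoder Enc -> 0 < shuffled_prob Enc x y ->
  [exists ep : {ffun 'I_n -> {ffun 'I_m -> 'I_l}} * 'S_(n * m),
     [forall i, 0 < Enc (x i) (ep.1 i)] &&
     (permute_coords ep.2 (concat_enc ep.1) == y)].
Proof.
move=> HE Hpos; apply/contraT => /existsPn Hn.
suff Hle : shuffled_prob Enc x y <= 0 by rewrite ltNge Hle in Hpos.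
apply: sumr_le0 => e _; apply: sumr_le0 => pi _.
move: (Hn (e, pi)) => /=; rewrite negb_and => /orP [/forallPn [i Hi]|/negPf ->];
  last by rewrite mulr0.
have H0 : Enc (x i) (e i) = 0.
  by apply/eqP; rewrite eq_le (proj1 (HE _) _) andbT leNgt.
by rewrite (bigD1 i) //= H0 !mul0r.
Qed.

Theorem mainTheorem12 (F : finFieldType) (n m l : nat) (s : F)
  (Enc : F -> {ffun 'I_m -> 'I_l} -> rat) (A : 'rV['I_l]_(n * m) -> F) :
  (1 <= n)%N -> (0 < l)%N ->
  is_aggregation_protocol Enc A ->
  forall y : 'rV['I_l]_(n * m),
    (#|Inv Enc s y| <= n ^ (n * m))%N.
Proof.
move=> _ _ [HE HA] y.
pose P (x : {ffun 'I_n -> F}) (ep : {ffun 'I_n -> {ffun 'I_m -> 'I_l}} * 'S_(n * m)) :=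
  [forall i, 0 < Enc (x i) (ep.1 i)] &&
  (permute_coords ep.2 (concat_enc ep.1) == y).
pose g (x : {ffun 'I_n -> F}) : {ffun 'I_(n * m) -> 'I_n} :=
  if [pick ep | P x ep] is Some ep then [ffun k => party (ep.2 k)]
  else [ffun k => party k].
have -> : (n ^ (n * m) = #|{ffun 'I_(n * m) -> 'I_n}|)%N
  by rewrite card_ffun !card_ord.
apply: (@leq_card_in _ _ g) => x x'.
rewrite !inE => /andP [_ /(witness HE) Hx] /andP [_ /(witness HE) Hx'].
rewrite /g; case: pickP => [[e pi] /andP [/forallP /= Pe /eqP Ey] |];
  last by move=> H; case/existsP: Hx => ep Hep; move: (H ep); rewrite /P Hep.
case: pickP => [[e' pi'] /andP [/forallP /= Pe' /eqP Ey'] |];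
  last by move=> H; case/existsP: Hx' => ep Hep; move: (H ep); rewrite /P Hep.
move=> /ffunP /= Hg; apply/ffunP => i.
have Hp k : party (pi k) = party (pi' k) by move: (Hg k); rewrite !ffunE.
pose x'' := [ffun t => if t == i then x' i else x t].
pose e'' := [ffun t => if t == i then e' i else e t].
pose sg k := if party (pi k) == i then pi' k else pi k.
have sg_inj : injective sg.
  move=> k1 k2; rewrite /sg.
  case: eqP => H1; case: eqP => H2.
  - exact: perm_inj.
  - by move=> E; case: H2; rewrite -E -Hp.
  - by move=> E; case: H1; rewrite E -Hp.
  - exact: perm_inj.
pose sigma : 'S_(n * m) := perm sg_inj.
have Ey'' : permute_coords sigma (concat_enc e'') = y.
  apply/rowP => k; rewrite /permute_coords mxE permE /sg.
  case: eqP => H.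
  - rewrite -Ey' /permute_coords mxE; apply: concat_party.
    by rewrite ffunE -Hp H eqxx.
  - rewrite -Ey /permute_coords mxE; apply: concat_party.
    by rewrite ffunE; move/eqP/negPf: H => ->.
have Hpos t : 0 < Enc (x'' t) (e'' t).
  by rewrite !ffunE; case: (t == i); [apply: Pe' | apply: Pe].
have := HA x'' e'' sigma Hpos; rewrite Ey'' -Ey (HA x e pi Pe).
rewrite (bigD1 i) //= [in RHS](bigD1 i) //= ffunE eqxx.
have -> : \sum_(t < n | t != i) x'' t = \sum_(t < n | t != i) x t.
  by apply: eq_bigr => t /negPf Ht; rewrite ffunE Ht.
by move/addIr.
Qed.
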